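(* Let $r\in\mathbb{N}$ and $v\in\mathbb{YF}^r$. Then $$d_r(\varepsilon,v)=d_1(\varepsilon,s(v))\cdot r^{d(v)}=r^{d(v)}\prod_{j=1}^{d(v)}g(v,j).$$
   Context: Fix $r\in\mathbb{N}$. Words and statistics. Consider finite words over $\{1_1,\dots,1_r,2\}$. A letter $1_i$ is a one with digit value $1$; $2$ is a two with digit value $2$. $\varepsilon$ is the empty word. $|x|$ is the sum of digit values, $d(x)$ the number of twos. The graph $\mathbb{YF}^r$. It is the graded graph on all finite words, graded by $|\cdot|$. From $x$ there is a downward edge to every word obtained by one of two operations: (i) delete the leftmost one; (ii) replace a $2$ lying left of the leftmost one (any $2$ if there are no ones) by $1_i$, with arbitrary $i\in\{1,\dots,r\}$. For $r=1$ write $1$ for $1_1$; $\mathbb{YF}=\mathbb{YF}^1$. The map $s:\mathbb{YF}^r\to\mathbb{YF}$ replaces every $1_i$ by $1$. Path counts. $d_r(x,y)$ is the number of downward paths $y=y_n\to\dots\to y_m=x$ in $\mathbb{YF}^r$ with $|y_i|=i$; $d_1$ is the count in $\mathbb{YF}$. The function $g$. Write $x=2\,1^{\beta_m}\,2\cdots2\,1^{\beta_1}\,2\,1^{\beta_0}$ (possibly preceded by a block of ones), where $1^{\beta}$ is a possibly empty block of $\beta$ consecutive ones. For $1\le j\le d(x)$ set $g(x,j)=\beta_0+\dots+\beta_{j-1}+2j-1$. *)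

(* Defs.v *)
From mathcomp Require Import all_boot.
Set Implicit Arguments. Unset Strict Implicit. Unset Printing Implicit Defensive.

(* Letters of YF^r: [Some i] is the one 1_{i+1} (i : 'I_r), [None] is the two 2. *)
Definition letter (r : nat) := option 'I_r.
Definition word (r : nat) := seq (letter r).

Definition eps {r} : word r := [::].

Definition dval {r} (a : letter r) : nat := if a is Some _ then 1 else 2.
Definition weight {r} (x : word r) : nat := sumn (map dval x).
Definition ntwos {r} (x : word r) : nat := count (fun a : letter r => a == None) x.

Definition is_one {r} (a : letter r) : bool := if a is Some _ then true else false.

Definition down {r} (x : word r) : seq (word r) :=
  let k := find is_one x in
  let del := if k < size x then [:: take k x ++ drop k.+1 x] else [::] in
  let repl := flatten [seq [seq set_nth None x p (Some i) | i <- enum 'I_r]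
                       | p <- iota 0 k & nth None x p == None] in
  undup (del ++ repl).

(* Every edge lowers |.| by exactly one, so the grading condition |y_i| = i is
   automatic; the fuel |y| bounds the length of any path. *)
Fixpoint npaths {r} (fuel : nat) (x y : word r) : nat :=
  if y == x then 1 else
  match fuel with
  | 0 => 0
  | f.+1 => sumn [seq npaths f x z | z <- down y]
  end.

Definition dpaths {r} (x y : word r) : nat := npaths (weight y) x y.

Definition sproj {r} (x : word r) : word 1 :=
  [seq (if a is Some _ then Some ord0 else None) | a <- x].

(* Blocks of ones: for x = 1^{b} 2 1^{beta_m} 2 ... 2 1^{beta_0},
   blocks (rev x) = [:: beta_0; beta_1; ...; beta_m; b]. *)
Fixpoint blocks {r} (w : word r) : seq nat :=
  match w with
  | [::] => [:: 0]
  | None :: w' => 0 :: blocks w'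
  | Some _ :: w' => match blocks w' with b :: bs => b.+1 :: bs | [::] => [:: 1] end
  end.

Definition beta {r} (x : word r) (k : nat) : nat := nth 0 (blocks (rev x)) k.

Definition gfun {r} (x : word r) (j : nat) : nat :=
  (\sum_(0 <= k < j) beta x k) + 2 * j - 1.

(* Main.v *)
Require Import Defs.
From mathcomp Require Import all_boot.
From mathcomp Require Import zify.
Set Implicit Arguments. Unset Strict Implicit. Unset Printing Implicit Defensive.

Section S.
Variable r : nat.
Implicit Types x y z u w : word r.

Definition kpos x := find is_one x.
Definition del x : seq (word r) :=
  if kpos x < size x then [:: take (kpos x) x ++ drop (kpos x).+1 x] else [::].
Definition repl x : seq (word r) :=
  flatten [seq [seq set_nth None x p (Some i) | i <- enum 'I_r]
                       | p <- iota 0 (kpos x) & nth None x p == None].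
Definition down0 x := del x ++ repl x.

Lemma downE x : down x = undup (down0 x).
Proof. by []. Qed.

Lemma down0_Some i u : down0 (Some i :: u) = [:: u].
Proof. by rewrite /down0 /del /repl /kpos /= drop0. Qed.

Lemma down0_nil : down0 [::] = [::].
Proof. by []. Qed.

Lemma del_None u : del (None :: u) = map (cons None) (del u).
Proof. by rewrite /del /kpos /= ltnS; case: ifP. Qed.

Lemma repl_None u : repl (None :: u) =
  [seq Some i :: u | i <- enum 'I_r] ++ map (cons None) (repl u).
Proof.
rewrite /repl /kpos /=.
rewrite -[1]/(1 + 0) iotaDl filter_map map_flatten -map_comp.
congr (_ ++ flatten _).
rewrite -map_comp; apply: eq_map => q /=.
by rewrite -map_comp.
Qed.

Lemma down0_None u : perm_eq (down0 (None :: u))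
  ([seq Some i :: u | i <- enum 'I_r] ++ map (cons None) (down0 u)).
Proof.
by rewrite /down0 del_None repl_None map_cat perm_catCA.
Qed.

Lemma uniq_down0 x : uniq (down0 x).
Proof.
elim: x => [|[i|] u IH]; first by rewrite down0_nil.
  by rewrite down0_Some.
rewrite (perm_uniq (down0_None u)) cat_uniq.
rewrite map_inj_uniq ?enum_uniq; last by move=> a b [].
rewrite map_inj_uniq //; last by move=> a b [].
rewrite IH andbT; apply/hasPn => z /mapP [z' _ ->].
by apply/mapP => [[i _]].
Qed.

Lemma down_down0 x : down x = down0 x.
Proof. by rewrite downE undup_id // uniq_down0. Qed.

Lemma weight_cons a u : weight (a :: u) = dval a + weight u.
Proof. by []. Qed.

Lemma weight_down0 y z : z \in down0 y -> (weight z).+1 = weight y.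
Proof.
elim: y z => [|[i|] u IH] z //.
  by rewrite down0_Some inE => /eqP ->.
rewrite (perm_mem (down0_None u)) mem_cat => /orP [] /mapP [z' Hz' ->].
  by rewrite !weight_cons.
by rewrite !weight_cons -(IH _ Hz').
Qed.

Fixpoint Fw x : nat :=
  match x with
  | [::] => 1
  | Some _ :: u => Fw u
  | None :: u => r * (weight u).+1 * Fw u
  end.

Lemma sumn_const (T : Type) (s : seq T) c : sumn [seq c | _ <- s] = size s * c.
Proof. by elim: s => //= a s ->. Qed.

Lemma sumn_scale (s : seq (word r)) (g h : word r -> nat) c :
  (forall z, z \in s -> g z = c * h z) -> sumn (map g s) = c * sumn (map h s).
Proof.
elim: s => [|a s IH] H /=; first by rewrite muln0.
by rewrite H ?inE ?eqxx // IH ?mulnDr // => z Hz; apply: H; rewrite inE Hz orbT.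
Qed.

Lemma sum_F y : y != [::] -> sumn (map Fw (down0 y)) = Fw y.
Proof.
elim: y => [|[i|] u IH] _ //; first by rewrite down0_Some /= addn0.
rewrite (perm_sumn (perm_map Fw (down0_None u))) map_cat sumn_cat -!map_comp.
rewrite /comp sumn_const -enumT size_enum_ord.
have [->|nz] := eqVneq u [::]; first by rewrite down0_nil /= !muln1 addn0.
rewrite (sumn_scale (h := Fw) (c := r * weight u)); last first.
  by move=> z Hz /=; rewrite (weight_down0 Hz).
rewrite -mulnA IH //.
change (Fw (None :: u)) with (r * (weight u).+1 * Fw u).
change (r * Fw u + r * (weight u * Fw u) = r * (weight u).+1 * Fw u); lia.
Qed.

Lemma npaths_F f y : weight y <= f -> npaths f eps y = Fw y.
Proof.
elim: f y => [|f IH] [|a u] //.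
- by rewrite weight_cons; case: a.
- move=> H; rewrite -(sum_F (y := a :: u)) //.
  rewrite [LHS]/= down_down0; congr sumn.
  apply/eq_in_map => z Hz; apply: IH.
  by have := weight_down0 Hz; lia.
Qed.

Lemma dpaths_F y : dpaths eps y = Fw y.
Proof. exact: npaths_F. Qed.

Fixpoint Gw x : nat :=
  match x with
  | [::] => 1
  | Some _ :: u => Gw u
  | None :: u => (weight u).+1 * Gw u
  end.

Lemma Fw_G x : Fw x = Gw x * r ^ ntwos x.
Proof.
elim: x => [|[i|] u IH] //=; rewrite IH /ntwos /= expnS. lia.
Qed.

End S.

Lemma weight_sproj r (x : word r) : weight (sproj x) = weight x.
Proof. by elim: x => [|[i|] u IH] //=; rewrite !weight_cons IH. Qed.

Lemma Gw_sproj r (x : word r) : Gw (sproj x) = Gw x.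
Proof. by elim: x => [|[i|] u IH] //=; rewrite IH weight_sproj. Qed.

Lemma Fw_sproj r (x : word r) : Fw (sproj x) = Gw x.
Proof. by rewrite Fw_G exp1n muln1 Gw_sproj. Qed.

Lemma blocks_Some r i (w : word r) : blocks (Some i :: w) = incr_nth (blocks w) 0.
Proof. by rewrite /=; case: (blocks w). Qed.

Lemma nth_blocks_rcons_Some r (w : word r) i k :
  nth 0 (blocks (rcons w (Some i))) k = nth 0 (blocks w) k + (k == ntwos w).
Proof.
elim: w k => [|[j|] w IH] k.
- by case: k => [|[|k]].
- rewrite rcons_cons !blocks_Some !nth_incr_nth IH /ntwos /=. lia.
- by rewrite rcons_cons /=; case: k => [|k] //=; rewrite IH.
Qed.

Lemma nth_blocks_rcons_None r (w : word r) k : k <= ntwos w ->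
  nth 0 (blocks (rcons w None)) k = nth 0 (blocks w) k.
Proof.
elim: w k => [|[j|] w IH] k.
- by case: k.
- rewrite rcons_cons !blocks_Some !nth_incr_nth /ntwos /= => H.
  by rewrite IH.
- rewrite rcons_cons /=; case: k => [|k] //= H.
  by rewrite IH.
Qed.

Lemma sum_blocks r (w : word r) :
  \sum_(0 <= k < (ntwos w).+1) nth 0 (blocks w) k = count is_one w.
Proof.
elim: w => [|[j|] w IH].
- by rewrite big_nat1.
- rewrite blocks_Some.
  have -> : ntwos (Some j :: w) = ntwos w by [].
  under eq_bigr do rewrite nth_incr_nth.
  rewrite big_split /= IH big_nat_recl // big1 //.
- have -> : ntwos (None :: w) = (ntwos w).+1 by [].
  by rewrite big_nat_recl //= IH.
Qed.

Lemma weight_count r (u : word r) : weight u = count is_one u + 2 * ntwos u.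
Proof.
elim: u => [|[j|] u IH] //; rewrite weight_cons IH /ntwos /=; lia.
Qed.

Lemma ntwos_rev r (u : word r) : ntwos (rev u) = ntwos u.
Proof. by rewrite /ntwos count_rev. Qed.

Lemma Gw_P r (v : word r) : Gw v = \prod_(1 <= j < (ntwos v).+1) gfun v j.
Proof.
elim: v => [|[i|] u IH].
- by rewrite big_geq.
- have -> : ntwos (Some i :: u) = ntwos u by [].
  rewrite /= IH; apply: eq_big_nat => j /andP [_ Hj].
  rewrite /gfun; congr (_ + _ - _); apply: eq_big_nat => k /andP [_ Hk].
  rewrite /beta rev_cons nth_blocks_rcons_Some ntwos_rev.
  have -> : (k == ntwos u) = false by apply/eqP; lia.
  by rewrite addn0.
- have -> : ntwos (None :: u) = (ntwos u).+1 by [].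
  rewrite big_nat_recr //= IH mulnC; congr (_ * _).
  + apply: eq_big_nat => j /andP [_ Hj].
    rewrite /gfun; congr (_ + _ - _); apply: eq_big_nat => k /andP [_ Hk].
    by rewrite /beta rev_cons nth_blocks_rcons_None // ntwos_rev; lia.
  + rewrite /gfun.
    have -> : \sum_(0 <= k < (ntwos u).+1) beta (None :: u) k = count is_one u.
      rewrite -count_rev -(sum_blocks (rev u)) ntwos_rev.
      apply: eq_big_nat => k /andP [_ Hk].
      by rewrite /beta rev_cons nth_blocks_rcons_None // ntwos_rev; lia.
    rewrite weight_count; lia.
Qed.

Theorem mainTheorem4 (r : nat) (hr : 0 < r) (v : word r) :
  dpaths eps v = dpaths eps (sproj v) * r ^ ntwos v /\
  dpaths eps (sproj v) * r ^ ntwos v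
    = r ^ ntwos v * \prod_(1 <= j < (ntwos v).+1) gfun v j.
Proof.
rewrite !dpaths_F Fw_sproj Fw_G; split => //.
by rewrite Gw_P mulnC.
Qed.
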